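(* Let $n\ge1$, $q\ge1$, $p>1$, and suppose $q+1<p$. For each $w\in C(\mathbb{H}^n)\cap L^\infty(\mathbb{H}^n)$ with $w>0$, there is $A>0$ such that if $u_0=Aw$, then there are no positive global classical solutions of $$u_t=u^q\Delta_{\mathbb{H}}u+u^p\ (t>0,\ \eta\in\mathbb{H}^n),\qquad u(0,\eta)=u_0(\eta).$$
   Context: $\mathbb{H}^n$ is $\mathbb{R}^{2n+1}$ with points $\eta=(x,y,\tau)$, $x,y\in\mathbb{R}^n$, $\tau\in\mathbb{R}$, group law $\eta\circ\eta'=(x+x',y+y',\tau+\tau'+2(x\cdot y'-x'\cdot y))$. $X_i=\partial_{x_i}-2y_i\partial_\tau$, $Y_i=\partial_{y_i}+2x_i\partial_\tau$ ($i=1,\dots,n$), and $\Delta_{\mathbb{H}}=\sum_{i=1}^n(X_i^2+Y_i^2)$. A global classical solution is a classical solution on $[0,T]\times\mathbb{H}^n$ for every $T>0$. *)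

(* Defs.v *)
From Stdlib Require Import Reals Lra Arith.
From Coquelicot Require Import Coquelicot.
Open Scope R_scope.

Definition idx (n : nat) : Type := { i : nat | (i < n)%nat }.

(* A point eta = (x, y, tau) of H^n = R^{2n+1}. *)
Definition Hpt (n : nat) : Type := ((idx n -> R) * (idx n -> R)) * R.

Definition hx {n} (p : Hpt n) : idx n -> R := fst (fst p).
Definition hy {n} (p : Hpt n) : idx n -> R := snd (fst p).
Definition htau {n} (p : Hpt n) : R := snd p.

Inductive coord (n : nat) : Type :=
| Cx : idx n -> coord n
| Cy : idx n -> coord n
| Ctau : coord n.
Arguments Cx {n} _.
Arguments Cy {n} _.
Arguments Ctau {n}.

Definition upd {n} (v : idx n -> R) (i : idx n) (s : R) : idx n -> R :=
  fun k => if Nat.eq_dec (proj1_sig k) (proj1_sig i) then s else v k.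

Definition getc {n} (p : Hpt n) (c : coord n) : R :=
  match c with
  | Cx i => hx p i
  | Cy i => hy p i
  | Ctau => htau p
  end.

Definition setc {n} (p : Hpt n) (c : coord n) (s : R) : Hpt n :=
  match c with
  | Cx i => ((upd (hx p) i s, hy p), htau p)
  | Cy i => ((hx p, upd (hy p) i s), htau p)
  | Ctau => ((hx p, hy p), s)
  end.

Definition pd {n} (c : coord n) (f : Hpt n -> R) (p : Hpt n) : R :=
  Derive (fun s => f (setc p c s)) (getc p c).

Definition has_pd {n} (c : coord n) (f : Hpt n -> R) (p : Hpt n) : Prop :=
  ex_derive (fun s => f (setc p c s)) (getc p c).

Definition Xf {n} (i : idx n) (f : Hpt n -> R) : Hpt n -> R :=
  fun p => pd (Cx i) f p - 2 * hy p i * pd Ctau f p.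
Definition Yf {n} (i : idx n) (f : Hpt n -> R) : Hpt n -> R :=
  fun p => pd (Cy i) f p + 2 * hx p i * pd Ctau f p.

Definition idx_ext {n} (F : idx n -> R) (k : nat) : R :=
  match Compare_dec.lt_dec k n with
  | left h => F (exist _ k h)
  | right _ => 0
  end.
Definition sum_idx (n : nat) (F : idx n -> R) : R :=
  match n return (idx n -> R) -> R with
  | O => fun _ => 0
  | S m => fun G => sum_n (idx_ext G) m
  end F.

Definition DeltaH {n} (f : Hpt n -> R) (p : Hpt n) : R :=
  sum_idx n (fun i => Xf i (Xf i f) p + Yf i (Yf i f) p).

Definition space_time (n : nat) : Type := (R * Hpt n)%type.

Definition uf {n} (u : R -> Hpt n -> R) : space_time n -> R :=
  fun z => u (fst z) (snd z).

Definition classical_solution (n : nat) (q p T : R) (u0 : Hpt n -> R)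
    (u : R -> Hpt n -> R) : Prop :=
  (forall t eta, 0 <= t <= T ->
     filterlim (uf u) (within (fun z : space_time n => 0 <= fst z <= T)
                          (locally (t, eta)))
               (locally (u t eta))) /\
  (forall t eta, 0 < t < T ->
     ex_derive (fun s => u s eta) t /\
     continuous (fun z : space_time n => Derive (fun s => u s (snd z)) (fst z)) (t, eta) /\
     forall c : coord n,
       has_pd c (u t) eta /\
       continuous (fun z : space_time n => pd c (u (fst z)) (snd z)) (t, eta) /\
       forall c' : coord n,
         has_pd c' (pd c (u t)) eta /\
         continuous (fun z : space_time n => pd c' (pd c (u (fst z))) (snd z)) (t, eta)) /\
  (forall t eta, 0 < t < T ->
     Derive (fun s => u s eta) t =
       Rpower (u t eta) q * DeltaH (u t) eta + Rpower (u t eta) p) /\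
  (forall eta, u 0 eta = u0 eta).

Definition global_classical_solution (n : nat) (q p : R) (u0 : Hpt n -> R)
    (u : R -> Hpt n -> R) : Prop :=
  forall T, 0 < T -> classical_solution n q p T u0 u.

Definition positive_solution {n} (u : R -> Hpt n -> R) : Prop :=
  forall t eta, 0 <= t -> 0 < u t eta.

Definition continuous_bounded {n} (w : Hpt n -> R) : Prop :=
  (forall eta, continuous w eta) /\ (exists M, forall eta, Rabs (w eta) <= M).

(* Main.v *)
Require Import Defs.
From Stdlib Require Import Reals Lra Lia Arith FunctionalExtensionality ClassicalEpsilon Classical.
From Coquelicot Require Import Coquelicot.
Open Scope R_scope.


Lemma ball_Hpt_intro n (P Q : Hpt n) e :
  (forall i, Rabs (hx Q i - hx P i) < e) -> (forall i, Rabs (hy Q i - hy P i) < e) ->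
  Rabs (htau Q - htau P) < e -> ball P e Q.
Proof.
  destruct P as [[px py] pt], Q as [[qx qy] qt]; unfold hx, hy, htau; simpl.
  intros H1 H2 H3. split; [split|]; simpl.
  - intro i. apply H1.
  - intro i. apply H2.
  - apply H3.
Qed.

Lemma ball_Hpt_elim n (P Q : Hpt n) e c :
  ball P e Q -> Rabs (getc Q c - getc P c) < e.
Proof.
  destruct P as [[px py] pt], Q as [[qx qy] qt]; intros [[H1 H2] H3].
  destruct c; simpl in *; unfold hx, hy, htau; simpl; [apply H1|apply H2|apply H3].
Qed.
Lemma idx_eq n (i j : idx n) : proj1_sig i = proj1_sig j -> i = j.
Proof.
  destruct i as [i hi], j as [j hj]; simpl; intros ->. f_equal. apply le_unique.
Qed.

Lemma upd_same n (v : idx n -> R) i s : upd v i s i = s.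
Proof. unfold upd. destruct Nat.eq_dec; [reflexivity| congruence]. Qed.

Lemma upd_upd n (v : idx n -> R) i a s : upd (upd v i a) i s = upd v i s.
Proof.
  apply functional_extensionality; intro k; unfold upd.
  destruct Nat.eq_dec; reflexivity.
Qed.

Lemma upd_id n (v : idx n -> R) i : upd v i (v i) = v.
Proof.
  apply functional_extensionality; intro k; unfold upd.
  destruct Nat.eq_dec as [e|]; [|reflexivity]. rewrite (idx_eq _ _ _ e). reflexivity.
Qed.

Definition spatial {n} (c : coord n) : Prop :=
  match c with Ctau => False | _ => True end.

Definition slice {n} (P : Hpt n) (c : coord n) (a b : R) : Hpt n :=
  setc (setc P c a) Ctau b.

Lemma slice_get n (P : Hpt n) c a b : spatial c -> getc (slice P c a b) c = a.
Proof. destruct c; simpl; try tauto; intros _; unfold hx, hy; simpl; apply upd_same. Qed.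

Lemma slice_set n (P : Hpt n) c a b s : spatial c -> setc (slice P c a b) c s = slice P c s b.
Proof.
  destruct P as [[px py] pt]; destruct c; try (simpl; tauto); intros _; unfold slice; cbn [setc hx hy htau fst snd]; rewrite upd_upd; reflexivity.
Qed.

Lemma slice_id n (P : Hpt n) c : spatial c -> slice P c (getc P c) (getc P Ctau) = P.
Proof.
  destruct P as [[px py] pt].
  destruct c; try (simpl; tauto); intros _; unfold slice; cbn [setc getc hx hy htau fst snd]; rewrite upd_id; reflexivity.
Qed.

Definition kap {n} (c : coord n) (p : Hpt n) : R :=
  match c with Cx i => -2 * hy p i | Cy i => 2 * hx p i | Ctau => 0 end.

Lemma kap_slice n (P : Hpt n) c a b : spatial c -> kap c (slice P c a b) = kap c P.
Proof. destruct c; simpl; try tauto; reflexivity. Qed.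

Lemma kap_setc n (P : Hpt n) c s : spatial c -> kap c (setc P c s) = kap c P.
Proof. destruct c; simpl; try tauto; reflexivity. Qed.

Lemma kap_setc_tau n (P : Hpt n) c s : kap c (setc P Ctau s) = kap c P.
Proof. destruct c; simpl; reflexivity. Qed.

Definition V {n} (c : coord n) (f : Hpt n -> R) : Hpt n -> R :=
  fun p => pd c f p + kap c p * pd Ctau f p.

Lemma Xf_V n i (f : Hpt n -> R) : Xf i f = V (Cx i) f.
Proof. apply functional_extensionality; intro p; unfold Xf, V; simpl; ring. Qed.
Lemma Yf_V n i (f : Hpt n -> R) : Yf i f = V (Cy i) f.
Proof. apply functional_extensionality; intro p; unfold Yf, V; simpl; ring. Qed.

Lemma slice_ball n (P : Hpt n) c a b a' b' e : spatial c ->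
  Rabs (a' - a) < e -> Rabs (b' - b) < e -> ball (slice P c a b) e (slice P c a' b').
Proof.
  intros hc Ha Hb. assert (He : 0 < e) by (apply Rle_lt_trans with (2 := Ha); apply Rabs_pos).
  assert (H0 : forall x:R, Rabs (x - x) < e) by (intro x; rewrite Rminus_diag, Rabs_R0; exact He).
  apply ball_Hpt_intro.
  - intro k. destruct c; simpl in hc; try tauto; unfold slice; cbn [setc hx hy htau fst snd]; auto.
    unfold upd; destruct Nat.eq_dec; auto.
  - intro k. destruct c; simpl in hc; try tauto; unfold slice; cbn [setc hx hy htau fst snd]; auto.
    unfold upd; destruct Nat.eq_dec; auto.
  - destruct c; exact Hb.
Qed.

Lemma ball_R (x y e : R) : ball x e y <-> Rabs (y - x) < e.
Proof. reflexivity. Qed.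

Lemma slice_cont n (P : Hpt n) c x y : spatial c ->
  filterlim (fun u : R * R => slice P c (fst u) (snd u)) (locally (x, y)) (locally (slice P c x y)).
Proof.
  intros hc. apply filterlim_locally. intros eps. exists eps. intros [a b] [H1 H2].
  simpl in *. apply slice_ball; auto.
Qed.

Lemma chain_line n c (hc : spatial c) (h : Hpt n -> R) (P : Hpt n) (k s0 : R) :
  (forall eta, has_pd c h eta) -> (forall eta, has_pd Ctau h eta) ->
  continuous (pd c h) (slice P c (getc P c + s0) (getc P Ctau + k * s0)) ->
  is_derive (fun s => h (slice P c (getc P c + s) (getc P Ctau + k * s))) s0
   (pd c h (slice P c (getc P c + s0) (getc P Ctau + k * s0))
    + k * pd Ctau h (slice P c (getc P c + s0) (getc P Ctau + k * s0))).
Proof.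
  intros H1 H2 Hc.
  set (F := fun a b => h (slice P c a b)).
  assert (F1 : forall a b, is_derive (fun z => F z b) a (pd c h (slice P c a b))).
  { intros a b. specialize (H1 (slice P c a b)). unfold has_pd in H1. unfold pd.
    rewrite slice_get in * by exact hc.
    apply (is_derive_ext (fun s => h (setc (slice P c a b) c s))).
    { intro t; unfold F; rewrite slice_set by exact hc; reflexivity. }
    apply Derive_correct. exact H1. }
  assert (F2 : forall a b, is_derive (fun z => F a z) b (pd Ctau h (slice P c a b))).
  { intros a b. apply Derive_correct. exact (H2 (slice P c a b)). }
  set (x := getc P c + s0). set (y := getc P Ctau + k * s0).
  assert (D : differentiable_pt_lim F x y (pd c h (slice P c x y)) (pd Ctau h (slice P c x y))).
  { apply filterdiff_differentiable_pt_lim.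
    apply (is_derive_filterdiff F x y (fun a b => pd c h (slice P c a b))).
    - apply filter_forall. intros [a b]. apply F1.
    - apply F2.
    - apply (filterlim_comp _ _ _ (fun u : R * R => slice P c (fst u) (snd u)) (pd c h) _ (locally (slice P c x y))).
      + apply slice_cont; exact hc.
      + exact Hc. }
  apply is_derive_Reals.
  replace (pd c h (slice P c x y) + k * pd Ctau h (slice P c x y))
    with (pd c h (slice P c x y) * 1 + pd Ctau h (slice P c x y) * k) by ring.
  apply (derivable_pt_lim_comp_2d F (fun s => getc P c + s) (fun s => getc P Ctau + k * s)).
  - exact D.
  - apply is_derive_Reals. auto_derive; auto; ring.
  - apply is_derive_Reals. auto_derive; auto; ring.
Qed.

Lemma deriv_sign (f : R -> R) x l : is_derive f x l -> 0 < l ->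
  exists d, 0 < d /\ forall s, 0 < s < d -> f x < f (x + s) /\ f (x - s) < f x.
Proof.
  intros Hd Hl. apply is_derive_Reals in Hd.
  destruct (Hd (l/2)) as [d Hd']; [lra|].
  exists d. split; [apply cond_pos|]. intros s Hs. split.
  - assert (H := Hd' s ltac:(lra) ltac:(rewrite Rabs_pos_eq; lra)).
    apply Rabs_def2 in H. destruct H as [Hu H].
    assert (0 < (f (x + s) - f x) / s) by lra.
    assert (0 < (f (x + s) - f x)). { apply Rmult_lt_reg_r with (/ s). apply Rinv_0_lt_compat; lra. rewrite Rmult_0_l. exact H0. }
    lra.
  - assert (H := Hd' (-s) ltac:(lra) ltac:(rewrite Rabs_Ropp, Rabs_pos_eq; lra)).
    apply Rabs_def2 in H. destruct H as [Hu H].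
    replace (x + - s) with (x - s) in H by ring.
    assert (0 < (f (x - s) - f x) / - s) by lra.
    assert (0 < (f x - f (x - s)) / s).
    { replace ((f x - f (x - s)) / s) with ((f (x - s) - f x) / - s) by (field; lra). exact H0. }
    assert (0 < (f x - f (x - s))). { apply Rmult_lt_reg_r with (/ s). apply Rinv_0_lt_compat; lra. rewrite Rmult_0_l. exact H1. }
    lra.
Qed.

Lemma deriv_min_zero (f : R -> R) l : (forall s, 0 <= f s) -> f 0 = 0 -> is_derive f 0 l -> l = 0.
Proof.
  intros Hpos H0 Hd. destruct (Rtotal_order l 0) as [Hl|[Hl|Hl]]; auto; exfalso.
  - assert (Hd' : is_derive (fun s => - f s) 0 (- l)) by (apply (is_derive_opp f); exact Hd).
    destruct (deriv_sign _ _ _ Hd' ltac:(lra)) as [d [Hd0 Hs]].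
    destruct (Hs (d/2) ltac:(lra)) as [A _]. specialize (Hpos (0 + d/2)). lra.
  - destruct (deriv_sign _ _ _ Hd Hl) as [d [Hd0 Hs]].
    destruct (Hs (d/2) ltac:(lra)) as [_ A]. specialize (Hpos (0 - d/2)). lra.
Qed.

Lemma second_min (phi G phi1 G1 : R -> R) (gp gG : R) :
  (forall s, G s <= phi s) -> G 0 = phi 0 ->
  (forall s, is_derive phi s (phi1 s)) -> (forall s, is_derive G s (G1 s)) ->
  is_derive phi1 0 gp -> is_derive G1 0 gG -> gG <= gp.
Proof.
  intros Hle H0 Hp HG Hp1 HG1.
  set (h := fun s => phi s - G s). set (h1 := fun s => phi1 s - G1 s).
  assert (Hh : forall s, is_derive h s (h1 s)) by (intro s; apply (is_derive_minus phi G); auto).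
  assert (Hh1 : is_derive h1 0 (gp - gG)) by (apply (is_derive_minus phi1 G1); auto).
  assert (hpos : forall s, 0 <= h s) by (intro s; unfold h; specialize (Hle s); lra).
  assert (h0 : h 0 = 0) by (unfold h; lra).
  assert (h10 : h1 0 = 0) by (apply (deriv_min_zero h); auto).
  destruct (Rle_or_lt gG gp) as [|Hlt]; auto. exfalso.
  assert (Hd' : is_derive (fun s => - h1 s) 0 (- (gp - gG))) by (apply (is_derive_opp h1); exact Hh1).
  destruct (deriv_sign _ _ _ Hd' ltac:(lra)) as [d [Hd0 Hs]].
  destruct (MVT_cor2 h h1 0 (d/2) ltac:(lra)) as [c [Ec Hc]].
  { intros c _. apply is_derive_Reals. apply Hh. }
  destruct (Hs c ltac:(lra)) as [A _]. replace (0 + c) with c in A by ring.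
  specialize (hpos (d/2)).
  assert (h1 c * (d/2 - 0) < 0). { apply Rmult_neg_pos; lra. }
  lra.
Qed.

Definition C2 {n} (f : Hpt n -> R) : Prop :=
  forall c eta, has_pd c f eta /\ continuous (pd c f) eta /\
    forall c', has_pd c' (pd c f) eta /\ continuous (pd c' (pd c f)) eta.

Lemma cont_getc n (c : coord n) (eta : Hpt n) : continuous (fun p => getc p c) eta.
Proof.
  apply filterlim_locally. intros eps. exists eps. intros p Hp.
  apply ball_R. apply ball_Hpt_elim. exact Hp.
Qed.

Lemma cont_kap n (c : coord n) eta : continuous (kap c) eta.
Proof.
  destruct c; simpl.
  - apply (continuous_mult (fun _ => -2) (fun p => getc p (Cy i))).
    apply continuous_const. apply cont_getc.
  - apply (continuous_mult (fun _ => 2) (fun p => getc p (Cx i))).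
    apply continuous_const. apply cont_getc.
  - apply continuous_const.
Qed.

Lemma kap_setc_gen n (c c' : coord n) eta s : spatial c -> (c' = c \/ c' = Ctau) ->
  kap c (setc eta c' s) = kap c eta.
Proof.
  intros hc [->| ->]. apply kap_setc; auto. apply kap_setc_tau.
Qed.

Lemma pd_V n c (hc : spatial c) (f : Hpt n -> R) c' eta : (c' = c \/ c' = Ctau) -> C2 f ->
  is_derive (fun s => V c f (setc eta c' s)) (getc eta c')
    (pd c' (pd c f) eta + kap c eta * pd c' (pd Ctau f) eta).
Proof.
  intros hc' H2. unfold V.
  apply (is_derive_ext (fun s => pd c f (setc eta c' s) + kap c eta * pd Ctau f (setc eta c' s))).
  { intro t. rewrite kap_setc_gen; auto. }
  apply (is_derive_plus (fun s => pd c f (setc eta c' s)) (fun s => kap c eta * pd Ctau f (setc eta c' s))).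
  - apply Derive_correct. apply (H2 c eta).
  - apply is_derive_scal. apply Derive_correct. apply (H2 Ctau eta).
Qed.

Lemma key n c (hc : spatial c) (f : Hpt n -> R) (P : Hpt n) (G G1 : R -> R) gG :
  C2 f ->
  (forall s, G s <= f (slice P c (getc P c + s) (getc P Ctau + kap c P * s))) ->
  G 0 = f P ->
  (forall s, is_derive G s (G1 s)) -> is_derive G1 0 gG ->
  gG <= V c (V c f) P.
Proof.
  intros H2 Hle H0 HG HG1.
  set (L := fun s => slice P c (getc P c + s) (getc P Ctau + kap c P * s)).
  assert (EL0 : L 0 = P).
  { unfold L. rewrite Rplus_0_r, Rmult_0_r, Rplus_0_r. apply slice_id; auto. }
  apply (second_min (fun s => f (L s)) G (fun s => V c f (L s)) G1 _ gG Hle).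
  - rewrite EL0. exact H0.
  - intro s. unfold L.
    assert (Hd := chain_line n c hc f P (kap c P) s (fun eta => proj1 (H2 c eta))
                  (fun eta => proj1 (H2 Ctau eta)) (proj1 (proj2 (H2 c _)))).
    unfold V at 1. rewrite kap_slice by exact hc. exact Hd.
  - exact HG.
  - assert (HV : forall c' eta, (c' = c \/ c' = Ctau) -> has_pd c' (V c f) eta /\
        pd c' (V c f) eta = pd c' (pd c f) eta + kap c eta * pd c' (pd Ctau f) eta).
    { intros c' eta hc'. assert (Hd := pd_V n c hc f c' eta hc' H2). split.
      - exists (pd c' (pd c f) eta + kap c eta * pd c' (pd Ctau f) eta). exact Hd.
      - unfold pd at 1. apply is_derive_unique. exact Hd. }
    assert (Hd := chain_line n c hc (V c f) P (kap c P) 0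
        (fun eta => proj1 (HV c eta (or_introl eq_refl)))
        (fun eta => proj1 (HV Ctau eta (or_intror eq_refl)))).
    fold (L 0) in Hd. rewrite EL0 in Hd.
    change (V c (V c f) P) with (pd c (V c f) P + kap c P * pd Ctau (V c f) P). apply Hd.
    apply (continuous_ext (fun eta => pd c (pd c f) eta + kap c eta * pd c (pd Ctau f) eta)).
    { intro eta. symmetry. apply (proj2 (HV c eta (or_introl eq_refl))). }
    apply (continuous_plus (fun eta => pd c (pd c f) eta) (fun eta => kap c eta * pd c (pd Ctau f) eta)).
    + apply (H2 c P).
    + apply (continuous_mult (kap c) (fun eta => pd c (pd Ctau f) eta)).
      * apply cont_kap.
      * apply (H2 Ctau P).
  - exact HG1.
Qed.



Fixpoint sumN (g : nat -> R) (N : nat) : R :=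
  match N with O => 0 | S N' => sumN g N' + g N' end.

Lemma sum_n_sumN (g : nat -> R) m : sum_n g m = sumN g (S m).
Proof.
  induction m. - simpl. rewrite sum_O. simpl. rewrite Rplus_0_l. reflexivity.
  - rewrite sum_Sn, IHm. reflexivity.
Qed.

Lemma sum_idx_sumN n F : sum_idx n F = sumN (idx_ext F) n.
Proof. destruct n. reflexivity. simpl sum_idx. apply sum_n_sumN. Qed.

Lemma sumN_ext g g' N : (forall j, (j < N)%nat -> g j = g' j) -> sumN g N = sumN g' N.
Proof. induction N; intros H; simpl; auto. rewrite IHN by (intros; apply H; lia). rewrite H by lia. reflexivity. Qed.

Lemma sumN_le g g' N : (forall j, (j < N)%nat -> g j <= g' j) -> sumN g N <= sumN g' N.
Proof. induction N; intros H; simpl. lra. apply Rplus_le_compat. apply IHN; intros; apply H; lia. apply H; lia. Qed.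

Lemma sumN_plus g g' N : sumN (fun j => g j + g' j) N = sumN g N + sumN g' N.
Proof. induction N; simpl. ring. rewrite IHN. ring. Qed.

Lemma sumN_scal c g N : sumN (fun j => c * g j) N = c * sumN g N.
Proof. induction N; simpl. ring. rewrite IHN. ring. Qed.

Lemma sumN_const c N : sumN (fun _ => c) N = INR N * c.
Proof. induction N; simpl sumN. simpl; ring. rewrite IHN, S_INR. ring. Qed.

Lemma sumN_upd g g' N j : (j < N)%nat -> (forall k, k <> j -> g' k = g k) ->
  sumN g' N = sumN g N - g j + g' j.
Proof.
  induction N; intros Hj H. lia. simpl.
  destruct (Nat.eq_dec j N) as [->|ne].
  - rewrite (sumN_ext g' g N). ring. intros k Hk. apply H. lia.
  - rewrite (IHN ltac:(lia) H). rewrite (H N) by lia. ring.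
Qed.

Lemma sumN_term g N j : (forall k, 0 <= g k) -> (j < N)%nat -> g j <= sumN g N.
Proof.
  intros Hp. induction N; intros Hj. lia. simpl.
  destruct (Nat.eq_dec j N) as [->|ne].
  - assert (0 <= sumN g N). { clear -Hp. induction N; simpl. lra. specialize (Hp N). lra. } lra.
  - specialize (IHN ltac:(lia)). specialize (Hp N). lra.
Qed.

Lemma sumN_nonneg g N : (forall k, 0 <= g k) -> 0 <= sumN g N.
Proof. intros Hp. induction N; simpl. lra. specialize (Hp N). lra. Qed.

Lemma idx_ext_at n (F : idx n -> R) (i : idx n) : idx_ext F (proj1_sig i) = F i.
Proof.
  unfold idx_ext. destruct Compare_dec.lt_dec as [h|h].
  - f_equal. apply idx_eq. reflexivity.
  - exfalso. apply h. apply proj2_sig.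
Qed.

Lemma sum_idx_le n F G : (forall i, F i <= G i) -> sum_idx n F <= sum_idx n G.
Proof.
  intros H. rewrite !sum_idx_sumN. apply sumN_le. intros j Hj. unfold idx_ext.
  destruct Compare_dec.lt_dec; [apply H| lra].
Qed.

Lemma sum_idx_plus n F G : sum_idx n (fun i => F i + G i) = sum_idx n F + sum_idx n G.
Proof.
  rewrite !sum_idx_sumN, <- sumN_plus. apply sumN_ext. intros j _. unfold idx_ext.
  destruct Compare_dec.lt_dec; [reflexivity| ring].
Qed.

Lemma sum_idx_scal n c F : sum_idx n (fun i => c * F i) = c * sum_idx n F.
Proof.
  rewrite !sum_idx_sumN, <- sumN_scal. apply sumN_ext. intros j _. unfold idx_ext.
  destruct Compare_dec.lt_dec; [reflexivity| ring].
Qed.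

Lemma sum_idx_const n c : sum_idx n (fun _ => c) = INR n * c.
Proof.
  rewrite !sum_idx_sumN, <- sumN_const. apply sumN_ext. intros j Hj. unfold idx_ext.
  destruct Compare_dec.lt_dec; [reflexivity| lia].
Qed.

Lemma sum_idx_term n F i : (forall k, 0 <= F k) -> F i <= sum_idx n F.
Proof.
  intros Hp. rewrite sum_idx_sumN, <- idx_ext_at. apply sumN_term.
  - intro k. unfold idx_ext. destruct Compare_dec.lt_dec; [apply Hp| lra].
  - apply proj2_sig.
Qed.

Lemma sum_idx_nonneg n F : (forall k, 0 <= F k) -> 0 <= sum_idx n F.
Proof.
  intros Hp. rewrite sum_idx_sumN. apply sumN_nonneg.
  intro k. unfold idx_ext. destruct Compare_dec.lt_dec; [apply Hp| lra].
Qed.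

Lemma sum_idx_upd n F G i : (forall k, proj1_sig k <> proj1_sig i -> G k = F k) ->
  sum_idx n G = sum_idx n F - F i + G i.
Proof.
  intros H. rewrite !sum_idx_sumN, <- (idx_ext_at n F i), <- (idx_ext_at n G i).
  apply sumN_upd. apply proj2_sig.
  intros k Hk. unfold idx_ext. destruct Compare_dec.lt_dec; [|reflexivity]. apply H. simpl. exact Hk.
Qed.

Lemma sumN_cont {U : UniformSpace} (F : U -> nat -> R) N x :
  (forall j, (j < N)%nat -> continuous (fun y => F y j) x) -> continuous (fun y => sumN (F y) N) x.
Proof.
  induction N; intros H; simpl. apply continuous_const.
  apply (continuous_plus (fun y => sumN (F y) N) (fun y => F y N)).
  apply IHN; intros; apply H; lia. apply H; lia.
Qed.

Lemma sum_idx_cont {U : UniformSpace} n (F : U -> idx n -> R) x :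
  (forall i, continuous (fun y => F y i) x) -> continuous (fun y => sum_idx n (F y)) x.
Proof.
  intros H. apply (continuous_ext (fun y => sumN (idx_ext (F y)) n)).
  { intro y. symmetry. apply sum_idx_sumN. }
  apply sumN_cont. intros j Hj. unfold idx_ext. destruct Compare_dec.lt_dec; [apply H| lia].
Qed.

Definition Zs {n} (eta : Hpt n) : R := sum_idx n (fun k => hx eta k ^ 2 + hy eta k ^ 2).
Definition rho {n} (eta : Hpt n) : R := Zs eta + htau eta ^ 2.

Lemma Zs_nonneg n (eta : Hpt n) : 0 <= Zs eta.
Proof. apply sum_idx_nonneg. intro k. nra. Qed.

Lemma rho_Zs n (eta : Hpt n) : Zs eta <= rho eta.
Proof. unfold rho. nra. Qed.

Lemma rho_nonneg n (eta : Hpt n) : 0 <= rho eta.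
Proof. pose proof (Zs_nonneg n eta). unfold rho. nra. Qed.

Lemma rho_slice n (P : Hpt n) c a b : spatial c ->
  rho (slice P c a b) = rho P - getc P c ^ 2 + a ^ 2 - htau P ^ 2 + b ^ 2.
Proof.
  intros hc. unfold rho, Zs. destruct c as [i|i|]; simpl in hc; try tauto; unfold slice; cbn [setc getc hx hy htau fst snd].
  - rewrite (sum_idx_upd n (fun k => hx P k ^ 2 + hy P k ^ 2) _ i).
    + rewrite upd_same.
      match goal with |- ?S1 - _ + _ + _ = ?S2 + _ - _ + _ - _ + _ => replace S1 with S2 by reflexivity end.
      unfold hx, hy. ring.
    + intros k Hk. unfold upd. destruct Nat.eq_dec; [contradiction|reflexivity].
  - rewrite (sum_idx_upd n (fun k => hx P k ^ 2 + hy P k ^ 2) _ i).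
    + rewrite upd_same.
      match goal with |- ?S1 - _ + _ + _ = ?S2 + _ - _ + _ - _ + _ => replace S1 with S2 by reflexivity end.
      unfold hx, hy. ring.
    + intros k Hk. unfold upd. destruct Nat.eq_dec; [contradiction|reflexivity].
Qed.

Lemma cont_rho n (eta : Hpt n) : continuous rho eta.
Proof.
  unfold rho, Zs.
  apply (continuous_plus (fun y => sum_idx n (fun k => hx y k ^ 2 + hy y k ^ 2)) (fun y => htau y ^ 2)).
  - apply sum_idx_cont. intro i.
    apply (continuous_ext (fun y => getc y (Cx i) * getc y (Cx i) + getc y (Cy i) * getc y (Cy i))).
    { intro y. simpl. ring. }
    apply (continuous_plus (fun y => getc y (Cx i) * getc y (Cx i)) (fun y => getc y (Cy i) * getc y (Cy i)));
    apply (continuous_mult (fun y => getc y _) (fun y => getc y _)); apply cont_getc.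
  - apply (continuous_ext (fun y => getc y Ctau * getc y Ctau)). { intro y. simpl. ring. }
    apply (continuous_mult (fun y => getc y _) (fun y => getc y _)); apply cont_getc.
Qed.

Lemma getc_bound n (eta : Hpt n) c : Rabs (getc eta c) <= 1 + rho eta.
Proof.
  assert (H : getc eta c ^ 2 <= rho eta).
  { pose proof (rho_Zs n eta). pose proof (Zs_nonneg n eta). destruct c as [i|i|]; simpl.
    - assert (hx eta i ^ 2 + hy eta i ^ 2 <= Zs eta) by (apply (sum_idx_term n (fun k => hx eta k ^ 2 + hy eta k ^ 2)); intro; nra). nra.
    - assert (hx eta i ^ 2 + hy eta i ^ 2 <= Zs eta) by (apply (sum_idx_term n (fun k => hx eta k ^ 2 + hy eta k ^ 2)); intro; nra). nra.
    - unfold rho. nra. }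
  destruct (Rle_or_lt 0 (getc eta c)); [rewrite Rabs_pos_eq | rewrite Rabs_left]; nra.
Qed.


Lemma incr_mono (phi : nat -> nat) : (forall k, (phi k < phi (S k))%nat) ->
  forall a b, (a < b)%nat -> (phi a < phi b)%nat.
Proof.
  intros H a b Hab. induction Hab. apply H. specialize (H m). lia.
Qed.

Lemma incr_ge (phi : nat -> nat) : (forall k, (phi k < phi (S k))%nat) -> forall k, (k <= phi k)%nat.
Proof. intros H k. induction k. lia. specialize (H k). lia. Qed.

Lemma filterlim_incr (phi : nat -> nat) : (forall k, (phi k < phi (S k))%nat) ->
  filterlim phi eventually eventually.
Proof.
  intros H P [N HN]. exists N. intros k Hk. apply HN. pose proof (incr_ge phi H k). lia.
Qed.

Lemma bw1 (u : nat -> R) B : (forall k, Rabs (u k) <= B) ->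
  exists phi : nat -> nat, (forall k, (phi k < phi (S k))%nat) /\ exists l : R, is_lim_seq (fun k => u (phi k)) l.
Proof.
  intros Hb.
  destruct (Bolzano_Weierstrass u (fun c => -B <= c <= B) (compact_P3 (-B) B)) as [l Hl].
  { intro k. specialize (Hb k). unfold Rabs in Hb. destruct Rcase_abs in Hb; lra. }
  assert (Hch : forall N k, exists p, (N <= p)%nat /\ Rabs (u p - l) < / INR (S k)).
  { intros N k. assert (pos : 0 < / INR (S k)) by (apply Rinv_0_lt_compat, lt_0_INR; lia).
    destruct (Hl (fun y => Rabs (y - l) < / INR (S k)) N) as [p Hp].
    - exists (mkposreal _ pos). intros y Hy. exact Hy.
    - exists p. exact Hp. }
  set (g := fun N k => proj1_sig (constructive_indefinite_description _ (Hch N k))).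
  assert (Hg : forall N k, (N <= g N k)%nat /\ Rabs (u (g N k) - l) < / INR (S k)).
  { intros N k. unfold g. destruct constructive_indefinite_description; simpl; auto. }
  set (phi := fix phi k := match k with O => g O O | S k' => g (S (phi k')) (S k') end).
  exists phi. split.
  - intro k. simpl. destruct (Hg (S (phi k)) (S k)). lia.
  - exists l. apply is_lim_seq_spec. intro eps.
    destruct (archimed_cor1 eps (cond_pos eps)) as [N [HN HN0]].
    exists N. intros k Hk.
    assert (Hk' : Rabs (u (phi k) - l) < / INR (S k)).
    { destruct k; simpl; apply Hg. }
    eapply Rlt_le_trans. exact Hk'. apply Rlt_le. eapply Rle_lt_trans; [|exact HN].
    apply Rinv_le_contravar. apply lt_0_INR; lia. apply le_INR; lia.
Qed.

Lemma extractN (m : nat) (f : nat -> nat -> R) B : (forall k j, Rabs (f k j) <= B) ->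
  exists phi : nat -> nat, (forall k, (phi k < phi (S k))%nat) /\
    exists l : nat -> R, forall j, (j < m)%nat -> is_lim_seq (fun k => f (phi k) j) (l j).
Proof.
  intros Hb. induction m.
  - exists (fun k => k). split. intro; lia. exists (fun _ => 0). intros; lia.
  - destruct IHm as [phi [Hphi [l Hl]]].
    destruct (bw1 (fun k => f (phi k) m) B) as [psi [Hpsi [lm Hlm]]]. { intro; apply Hb. }
    exists (fun k => phi (psi k)). split.
    + intro k. apply incr_mono; auto.
    + exists (fun j => if Nat.eq_dec j m then lm else l j). intros j Hj.
      destruct Nat.eq_dec as [->|ne].
      * exact Hlm.
      * apply (is_lim_seq_subseq (fun k => f (phi k) j)). apply filterlim_incr; auto.
        apply Hl. lia.
Qed.

Lemma ev_forall_lt (m : nat) (P : nat -> nat -> Prop) :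
  (forall j, (j < m)%nat -> eventually (P j)) -> eventually (fun k => forall j, (j < m)%nat -> P j k).
Proof.
  induction m; intros H.
  - exists O. intros; lia.
  - assert (H1 := IHm (fun j Hj => H j ltac:(lia))). assert (H2 := H m ltac:(lia)).
    generalize (filter_and _ _ H1 H2). apply filter_imp. intros k [A B] j Hj.
    destruct (Nat.eq_dec j m) as [->|ne]; auto. apply A. lia.
Qed.

Definition enc {n} (eta : Hpt n) (j : nat) : R :=
  if Compare_dec.lt_dec j n then idx_ext (hx eta) j
  else if Compare_dec.lt_dec j (n + n) then idx_ext (hy eta) (j - n) else htau eta.

Lemma enc_bound n (eta : Hpt n) j : Rabs (enc eta j) <= 1 + rho eta.
Proof.
  pose proof (rho_nonneg n eta).
  unfold enc, idx_ext. repeat destruct Compare_dec.lt_dec;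
   try (rewrite Rabs_R0; lra).
  - apply (getc_bound n eta (Cx _)).
  - apply (getc_bound n eta (Cy _)).
  - apply (getc_bound n eta Ctau).
Qed.

Lemma enc_x n (eta : Hpt n) i : enc eta (proj1_sig i) = hx eta i.
Proof.
  unfold enc. destruct Compare_dec.lt_dec as [h|h]. apply idx_ext_at.
  exfalso. apply h. apply proj2_sig.
Qed.

Lemma enc_y n (eta : Hpt n) i : enc eta (n + proj1_sig i) = hy eta i.
Proof.
  unfold enc. destruct Compare_dec.lt_dec as [h|h]. lia.
  destruct Compare_dec.lt_dec as [h'|h']. 
  - replace (n + proj1_sig i - n)%nat with (proj1_sig i) by lia. apply idx_ext_at.
  - exfalso. pose proof (proj2_sig i). simpl in *. lia.
Qed.

Lemma enc_t n (eta : Hpt n) : enc eta (n + n) = htau eta.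
Proof.
  unfold enc. destruct Compare_dec.lt_dec as [h|h]. lia.
  destruct Compare_dec.lt_dec as [h'|h']. lia. reflexivity.
Qed.

Lemma extract_Hpt n (eta : nat -> Hpt n) Rb : (forall k, rho (eta k) <= Rb) ->
  exists phi : nat -> nat, (forall k, (phi k < phi (S k))%nat) /\
    exists es : Hpt n, filterlim (fun k => eta (phi k)) eventually (locally es).
Proof.
  intros Hb.
  destruct (extractN (n + n + 1) (fun k j => enc (eta k) j) (1 + Rb)) as [phi [Hphi [l Hl]]].
  { intros k j. eapply Rle_trans. apply enc_bound. specialize (Hb k). lra. }
  exists phi. split; auto.
  exists ((fun i => l (proj1_sig i), fun i => l (n + proj1_sig i)%nat), l (n + n)%nat).
  apply filterlim_locally. intro eps.
  assert (H := ev_forall_lt (n + n + 1) (fun j k => Rabs (enc (eta (phi k)) j - l j) < eps)).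
  eapply filter_imp; [|apply H].
  - intros k Hk. apply ball_Hpt_intro.
    + intro i. rewrite <- enc_x. apply Hk. pose proof (proj2_sig i). simpl in *. lia.
    + intro i. rewrite <- enc_y. apply Hk. pose proof (proj2_sig i). simpl in *. lia.
    + rewrite <- enc_t. apply Hk. lia.
  - intros j Hj. specialize (Hl j Hj). apply is_lim_seq_spec in Hl. apply (Hl eps).
Qed.


Lemma filterlim_within_seq n (z : nat -> space_time n) (D : space_time n -> Prop) zs :
  filterlim z eventually (locally zs) -> (forall k, D (z k)) ->
  filterlim z eventually (within D (locally zs)).
Proof.
  intros Hz HD P HP. unfold within in HP. specialize (Hz _ HP). unfold filtermap in *.
  eapply filter_imp; [|exact Hz]. intros k Hk. apply Hk. apply HD.
Qed.

Lemma inv_S_le k N : (N <= k)%nat -> (0 < N)%nat -> / INR (S k) <= / INR N.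
Proof. intros. apply Rinv_le_contravar. apply lt_0_INR; lia. apply le_INR; lia. Qed.

Lemma comparison n (u v : R -> Hpt n -> R) (T t1 R0 : R) :
  0 <= t1 < T ->
  (forall t eta, 0 <= t <= T -> filterlim (uf u)
      (within (fun z : space_time n => 0 <= fst z <= T) (locally (t, eta))) (locally (u t eta))) ->
  (forall t eta, 0 <= t <= t1 -> continuous (uf v) (t, eta)) ->
  (forall t eta, 0 <= t <= t1 -> 0 < v t eta -> rho eta <= R0) ->
  (forall t eta, 0 <= t <= t1 -> 0 < u t eta) ->
  (forall eta, v 0 eta < u 0 eta) ->
  (forall ts es, 0 < ts <= t1 -> (forall t, 0 <= t < ts -> forall eta, v t eta < u t eta) ->
       (forall eta, v ts eta <= u ts eta) -> v ts es = u ts es -> False) ->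
  forall t eta, 0 <= t <= t1 -> v t eta < u t eta.
Proof.
  intros Ht1 Hu Hv Hb Hpos H0 Htouch t eta Ht.
  apply Rnot_le_lt. intro Hle.
  set (Sset := fun t' => 0 <= t' <= t1 /\ exists e, u t' e <= v t' e).
  set (E := fun x => Sset (- x)).
  assert (HE : bound E). { exists 0. intros x [Hx _]. lra. }
  assert (HEx : exists x, E x). { exists (- t). unfold E, Sset. rewrite Ropp_involutive. split; [lra|]. exists eta; exact Hle. }
  destruct (completeness E HE HEx) as [mm [Hub Hleast]].
  set (ts := - mm).
  assert (Ha : forall t', Sset t' -> ts <= t').
  { intros t' St'. assert (E (- t')) by (unfold E; rewrite Ropp_involutive; exact St').
    specialize (Hub _ H). unfold ts. lra. }
  assert (Hbb : forall e, 0 < e -> exists t', Sset t' /\ t' < ts + e).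
  { intros e He. apply NNPP. intro Hn.
    assert (is_upper_bound E (- (ts + e))).
    { intros x Ex. apply Rnot_lt_le. intro Hx. apply Hn. exists (- x). split. exact Ex. lra. }
    specialize (Hleast _ H). unfold ts in Hleast. lra. }
  assert (Hts0 : 0 <= ts). { assert (mm <= 0). { apply Hleast. intros x [Hx _]. lra. } unfold ts; lra. }
  assert (Htst : ts <= t). { apply Ha. split; [lra|]. exists eta; exact Hle. }
  assert (Hseq : forall k, exists z : space_time n, (0 <= fst z <= t1 /\ u (fst z) (snd z) <= v (fst z) (snd z))
                  /\ fst z < ts + / INR (S k)).
  { intro k. assert (0 < / INR (S k)) by (apply Rinv_0_lt_compat, lt_0_INR; lia).
    destruct (Hbb _ H) as [t' [[Ht' [e He]] Hlt]]. exists (t', e). simpl. auto. }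
  set (zf := fun k => proj1_sig (constructive_indefinite_description _ (Hseq k))).
  assert (Hzf : forall k, (0 <= fst (zf k) <= t1 /\ u (fst (zf k)) (snd (zf k)) <= v (fst (zf k)) (snd (zf k)))
                  /\ fst (zf k) < ts + / INR (S k)).
  { intro k. unfold zf. destruct constructive_indefinite_description; simpl; auto. }
  assert (HSk : forall k, Sset (fst (zf k))). { intro k. destruct (Hzf k) as [[A B] _]. split; auto. eexists; exact B. }
  destruct (extract_Hpt n (fun k => snd (zf k)) R0) as [phi [Hphi [es Hes]]].
  { intro k. destruct (Hzf k) as [[A B] _]. apply (Hb (fst (zf k))); auto.
    eapply Rlt_le_trans; [|exact B]. apply Hpos. lra. }
  set (zk := fun k => zf (phi k)).
  assert (Hzk : filterlim zk eventually (locally (ts, es))).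
  { apply (proj2 (filterlim_locally (F := eventually) zk (ts, es))). intro eps.
    assert (H1 : eventually (fun k => ball ts eps (fst (zk k)))).
    { destruct (archimed_cor1 eps (cond_pos eps)) as [N [HN HN0]].
      exists N. intros k Hk. apply ball_R. unfold zk.
      pose proof (Ha _ (HSk (phi k))). destruct (Hzf (phi k)) as [_ Hl].
      pose proof (incr_ge phi Hphi k). pose proof (inv_S_le (phi k) N ltac:(lia) HN0).
      rewrite Rabs_pos_eq; lra. }
    assert (H2 := proj1 (filterlim_locally _ _) Hes eps).
    generalize (filter_and _ _ H1 H2). apply filter_imp. intros k [A B]. split; auto. }
  assert (Lu : is_lim_seq (fun k => uf u (zk k)) (u ts es)).
  { apply (filterlim_comp _ _ _ zk (uf u) _ (within (fun z : space_time n => 0 <= fst z <= T) (locally (ts, es)))).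
    - apply filterlim_within_seq; auto. intro k. unfold zk. destruct (Hzf (phi k)) as [[A _] _]. lra.
    - apply Hu. lra. }
  assert (Lv : is_lim_seq (fun k => uf v (zk k)) (v ts es)).
  { apply (filterlim_comp _ _ _ zk (uf v) _ (locally (ts, es))); auto.
    apply Hv. lra. }
  assert (Hles : u ts es <= v ts es).
  { assert (Hr := is_lim_seq_le _ _ _ _ (fun k => proj2 (proj1 (Hzf (phi k)))) Lu Lv). exact Hr. }
  assert (Htspos : 0 < ts).
  { destruct Hts0 as [|E0]; auto. rewrite <- E0 in Hles. specialize (H0 es). lra. }
  assert (Hbefore : forall t', 0 <= t' < ts -> forall e, v t' e < u t' e).
  { intros t' Ht' e. apply Rnot_le_lt. intro He.
    assert (Sset t') by (split; [lra| exists e; exact He]). specialize (Ha _ H). lra. }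
  assert (Hall : forall e, v ts e <= u ts e).
  { intros e. apply Rnot_lt_le. intro Hlt.
    set (d := v ts e - u ts e).
    assert (Hd : 0 < d / 2) by (unfold d; lra).
    destruct (proj1 (filterlim_locally (F := within (fun z : space_time n => 0 <= fst z <= T) (locally (ts, e))) (FF := within_filter _ _ _ (@filter_filter _ _ (locally_filter _))) (uf u) (u ts e)) (Hu ts e ltac:(lra)) (mkposreal _ Hd)) as [d1 Hd1].
    destruct (proj1 (filterlim_locally (F := locally (ts, e)) (uf v) (v ts e)) (Hv ts e ltac:(lra)) (mkposreal _ Hd)) as [d2 Hd2].
    set (t' := ts - Rmin (Rmin d1 d2) ts / 2).
    assert (Hm : 0 < Rmin (Rmin d1 d2) ts).
    { apply Rmin_pos; [apply Rmin_pos; apply cond_pos| lra]. }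
    assert (Hm1 : Rmin (Rmin d1 d2) ts <= d1) by (eapply Rle_trans; [apply Rmin_l| apply Rmin_l]).
    assert (Hm2 : Rmin (Rmin d1 d2) ts <= d2) by (eapply Rle_trans; [apply Rmin_l| apply Rmin_r]).
    assert (Hm3 : Rmin (Rmin d1 d2) ts <= ts) by apply Rmin_r.
    assert (B1 : ball (ts, e) d1 (t', e)).
    { split. apply ball_R. unfold t'; simpl. rewrite Rabs_left; lra. apply ball_center. }
    assert (B2 : ball (ts, e) d2 (t', e)).
    { split. apply ball_R. unfold t'; simpl. rewrite Rabs_left; lra. apply ball_center. }
    specialize (Hd1 _ B1 ltac:(simpl; unfold t'; lra)). specialize (Hd2 _ B2).
    apply ball_R in Hd1. apply ball_R in Hd2. unfold uf in Hd1, Hd2; simpl in Hd1, Hd2.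
    apply Rabs_def2 in Hd1. apply Rabs_def2 in Hd2.
    assert (v t' e < u t' e).
    { apply Rnot_le_lt. intro He.
      assert (Sset t') by (split; [unfold t'; lra| exists e; exact He]). specialize (Ha _ H). unfold t' in Ha. lra. }
    unfold d, minus, plus, opp in *. simpl in *. lra. }
  apply (Htouch ts es); auto. lra. apply Rle_antisym; auto.
Qed.


Lemma Rpower_gt0 x y : 0 < Rpower x y.
Proof. unfold Rpower. apply exp_pos. Qed.

Lemma Rpower_le_neg x y e : 0 < x <= y -> e <= 0 -> Rpower y e <= Rpower x e.
Proof.
  intros Hxy He. replace e with (- (- e)) by ring. rewrite (Rpower_Ropp y (- e)), (Rpower_Ropp x (- e)).
  apply Rinv_le_contravar. apply Rpower_gt0. apply Rle_Rpower_l; lra.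
Qed.

Lemma Rpower_base1 y : Rpower 1 y = 1.
Proof. unfold Rpower. rewrite ln_1, Rmult_0_r. apply exp_0. Qed.

Lemma Rpower_le_self s q : 0 < s <= 1 -> 1 <= q -> Rpower s q <= s.
Proof.
  intros Hs Hq. replace q with (1 + (q - 1)) by ring. rewrite Rpower_plus, Rpower_1 by lra.
  assert (Rpower s (q - 1) <= 1). { apply Rle_trans with (Rpower 1 (q - 1)). apply Rle_Rpower_l; lra. rewrite Rpower_base1; lra. }
  assert (0 < Rpower s (q - 1)) by apply Rpower_gt0. nra.
Qed.

Lemma final_ineq p dl s : 1 < p -> 0 < dl -> 0 < s <= 1 ->
  let s0 := dl / (2 * (dl + 2)) in let eps := Rpower s0 p / 4 in
  0 < Rpower s p + eps * dl * (1 - s) - 2 * eps * s.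
Proof.
  intros Hp Hdl Hs s0 eps.
  assert (Hs0 : 0 < s0) by (unfold s0; apply Rdiv_lt_0_compat; lra).
  assert (Heps : 0 < eps) by (unfold eps; pose proof (Rpower_gt0 s0 p); lra).
  pose proof (Rpower_gt0 s p).
  destruct (Rle_or_lt s s0) as [Hle|Hlt].
  - assert (s * (dl + 2) <= dl / 2).
    { apply Rle_trans with (s0 * (dl + 2)). apply Rmult_le_compat_r; lra.
      unfold s0. right. field. lra. }
    assert (eps * (s * (dl + 2)) <= eps * (dl / 2)) by (apply Rmult_le_compat_l; lra).
    assert (0 < eps * dl) by (apply Rmult_lt_0_compat; lra).
    nra.
  - assert (Rpower s0 p < Rpower s p) by (apply Rlt_Rpower_l; lra).
    assert (E4 : Rpower s0 p = 4 * eps) by (unfold eps; field).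
    assert (0 <= eps * dl * (1 - s)) by (apply Rmult_le_pos; [apply Rmult_le_pos|]; lra).
    assert (eps * s <= eps * 1) by (apply Rmult_le_compat_l; lra).
    lra.
Qed.

Lemma deriv_left_nonpos (D : R -> R) x l r : is_derive D x l -> D x = 0 -> 0 < r ->
  (forall t, x - r < t < x -> 0 < D t) -> l <= 0.
Proof.
  intros Hd H0 Hr Hpos. apply Rnot_lt_le. intro Hl.
  destruct (deriv_sign D x l Hd Hl) as [d [Hd0 Hs]].
  set (s := Rmin d r / 2).
  assert (0 < Rmin d r) by (apply Rmin_pos; lra).
  assert (Rmin d r <= d) by apply Rmin_l. assert (Rmin d r <= r) by apply Rmin_r.
  destruct (Hs s ltac:(unfold s; lra)) as [_ A].
  specialize (Hpos (x - s) ltac:(unfold s; lra)). lra.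
Qed.

Lemma lim_inv_S : is_lim_seq (fun k => / INR (S k)) 0.
Proof.
  apply is_lim_seq_spec. intro eps.
  destruct (archimed_cor1 eps (cond_pos eps)) as [N [HN HN0]].
  exists N. intros k Hk. rewrite Rminus_0_r, Rabs_pos_eq.
  - eapply Rle_lt_trans; [|exact HN]. apply inv_S_le; lia.
  - apply Rlt_le, Rinv_0_lt_compat, lt_0_INR; lia.
Qed.

Lemma w_lower n (w : Hpt n -> R) : (forall eta, continuous w eta) -> (forall eta, 0 < w eta) ->
  exists m, 0 < m /\ forall eta, rho eta <= 1 -> m <= w eta.
Proof.
  intros Hc Hp. apply NNPP. intro Hn.
  assert (Hs : forall k : nat, exists eta, rho eta <= 1 /\ w eta < / INR (S k)).
  { intro k. apply NNPP. intro Hk. apply Hn. exists (/ INR (S k)). split.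
    apply Rinv_0_lt_compat, lt_0_INR; lia.
    intros eta He. apply Rnot_lt_le. intro Hw. apply Hk. exists eta. split; auto. }
  set (ef := fun k => proj1_sig (constructive_indefinite_description _ (Hs k))).
  assert (Hef : forall k, rho (ef k) <= 1 /\ w (ef k) < / INR (S k)).
  { intro k. unfold ef. destruct constructive_indefinite_description; simpl; auto. }
  destruct (extract_Hpt n ef 1) as [phi [Hphi [es Hes]]]. { intro k. apply Hef. }
  assert (L1 : is_lim_seq (fun k => w (ef (phi k))) (w es)).
  { apply (filterlim_comp _ _ _ (fun k => ef (phi k)) w _ (locally es)). exact Hes. apply Hc. }
  assert (L2 : is_lim_seq (fun k => / INR (S k)) 0) by apply lim_inv_S.
  assert (Hle : forall k, w (ef (phi k)) <= / INR (S k)).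
  { intro k. apply Rlt_le. eapply Rlt_le_trans. apply (proj2 (Hef (phi k))).
    apply Rinv_le_contravar. apply lt_0_INR; lia. apply le_INR. pose proof (incr_ge phi Hphi k). lia. }
  assert (Hr := is_lim_seq_le _ _ _ _ Hle L1 L2).
  simpl in Hr. specialize (Hp es). lra.
Qed.


Lemma line_bound n c (hc : spatial c) (f : Hpt n -> R) (P : Hpt n) (K Bq : R) :
  C2 f -> (forall eta, K - Bq * rho eta <= f eta) -> K - Bq * rho P = f P ->
  - Bq * (2 + 2 * kap c P ^ 2) <= V c (V c f) P.
Proof.
  intros H2 Hle Heq. set (k := kap c P). set (x := getc P c). set (tau := getc P Ctau).
  apply (key n c hc f P (fun s => K - Bq * (rho P - x ^ 2 + (x + s) ^ 2 - htau P ^ 2 + (tau + k * s) ^ 2))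
           (fun s => - Bq * (2 * (x + s) + 2 * k * (tau + k * s)))).
  - exact H2.
  - intro s. unfold x, tau, k. rewrite <- rho_slice by exact hc. apply Hle.
  - rewrite <- Heq. f_equal. f_equal. unfold tau. simpl. ring.
  - intro s. auto_derive. auto. ring.
  - auto_derive. auto. ring.
Qed.

Lemma laplace_bound n (f : Hpt n -> R) (P : Hpt n) (K Bq : R) :
  C2 f -> (forall eta, K - Bq * rho eta <= f eta) -> K - Bq * rho P = f P ->
  - Bq * (4 * INR n + 8 * Zs P) <= DeltaH f P.
Proof.
  intros H2 Hle Heq. unfold DeltaH.
  apply Rle_trans with (sum_idx n (fun i => - Bq * (2 + 2 * kap (Cx i) P ^ 2) + - Bq * (2 + 2 * kap (Cy i) P ^ 2))).
  - right. unfold Zs.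
    replace (fun i => - Bq * (2 + 2 * kap (Cx i) P ^ 2) + - Bq * (2 + 2 * kap (Cy i) P ^ 2))
      with (fun i => (- Bq * 4) * 1 + (- 8 * Bq) * (hx P i ^ 2 + hy P i ^ 2)).
    + rewrite (sum_idx_plus n (fun _ => - Bq * 4 * 1) (fun i => - 8 * Bq * (hx P i ^ 2 + hy P i ^ 2))).
      rewrite (sum_idx_scal n (- Bq * 4) (fun _ => 1)), (sum_idx_scal n (-8 * Bq) (fun i => hx P i ^ 2 + hy P i ^ 2)), sum_idx_const. ring.
    + apply functional_extensionality. intro i. simpl. ring.
  - apply sum_idx_le. intro i. rewrite !Xf_V, !Yf_V.
    apply Rplus_le_compat; [apply (line_bound n (Cx i) I f P K Bq) | apply (line_bound n (Cy i) I f P K Bq)]; auto.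
Qed.


Definition aF (th0 kp e1 t : R) : R := Rpower (th0 - kp * t) e1.
Definition vF {n} (th0 kp e1 pq lam : R) (t : R) (eta : Hpt n) : R :=
  aF th0 kp e1 t - Rpower (aF th0 kp e1 t) pq * rho eta / lam.

Lemma pow_derive th0 kp e t : 0 < th0 - kp * t ->
  is_derive (fun t => Rpower (th0 - kp * t) e) t (e * Rpower (th0 - kp * t) (e - 1) * (- kp)).
Proof.
  intros H.
  assert (H1 := is_derive_comp (fun x => Rpower x e) (fun t => th0 - kp * t) t
                 (e * Rpower (th0 - kp * t) (e - 1)) (- kp)).
  replace (e * Rpower (th0 - kp * t) (e - 1) * - kp) with (scal (- kp) (e * Rpower (th0 - kp * t) (e - 1))).
  - apply H1.
    + apply is_derive_Reals. apply derivable_pt_lim_power. exact H.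
    + auto_derive. auto. ring.
  - unfold scal; simpl; unfold mult; simpl. ring.
Qed.

Lemma vF_eq n th0 kp e1 pq lam t (eta : Hpt n) :
  vF th0 kp e1 pq lam t eta = Rpower (th0 - kp * t) e1 - (rho eta / lam) * Rpower (th0 - kp * t) (e1 * pq).
Proof. unfold vF, aF. rewrite Rpower_mult. unfold Rdiv. ring. Qed.

Lemma vF_derive n th0 kp e1 pq lam t (eta : Hpt n) : 0 < th0 - kp * t ->
  is_derive (fun t => vF th0 kp e1 pq lam t eta) t
   (e1 * Rpower (th0 - kp * t) (e1 - 1) * (- kp)
    - (e1 * pq) * Rpower (th0 - kp * t) (e1 * pq - 1) * (- kp) * rho eta / lam).
Proof.
  intros H.
  apply (is_derive_ext (fun t => Rpower (th0 - kp * t) e1 - (rho eta / lam) * Rpower (th0 - kp * t) (e1 * pq))).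
  { intro s. symmetry. apply vF_eq. }
  replace (e1 * Rpower (th0 - kp * t) (e1 - 1) * (- kp)
    - (e1 * pq) * Rpower (th0 - kp * t) (e1 * pq - 1) * (- kp) * rho eta / lam)
   with (e1 * Rpower (th0 - kp * t) (e1 - 1) * (- kp)
    - (rho eta / lam) * ((e1 * pq) * Rpower (th0 - kp * t) (e1 * pq - 1) * (- kp))) by (unfold Rdiv; ring).
  apply (is_derive_minus (fun t => Rpower (th0 - kp * t) e1) (fun t => (rho eta / lam) * Rpower (th0 - kp * t) (e1 * pq))).
  - apply pow_derive; auto.
  - apply is_derive_scal. apply pow_derive; auto.
Qed.

Lemma vF_cont n th0 kp e1 pq lam t (eta : Hpt n) : 0 < th0 - kp * t ->
  continuous (uf (vF th0 kp e1 pq lam)) (t, eta).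
Proof.
  intros H.
  set (g1 := fun t => Rpower (th0 - kp * t) e1). set (g2 := fun t => Rpower (th0 - kp * t) (e1 * pq)).
  assert (C1 : continuous (fun z : space_time n => g1 (fst z)) (t, eta)).
  { apply (continuous_comp fst g1). apply continuous_fst. simpl.
    exact (ex_derive_continuous g1 t (ex_intro _ _ (pow_derive th0 kp e1 t H))). }
  assert (C2' : continuous (fun z : space_time n => g2 (fst z)) (t, eta)).
  { apply (continuous_comp fst g2). apply continuous_fst. simpl.
    exact (ex_derive_continuous g2 t (ex_intro _ _ (pow_derive th0 kp (e1 * pq) t H))). }
  assert (C3 : continuous (fun z : space_time n => rho (snd z) * / lam) (t, eta)).
  { apply (continuous_comp snd (fun e => rho e * / lam)). apply continuous_snd. simpl.
    apply (continuous_mult rho (fun _ => / lam)). apply cont_rho. apply continuous_const. }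
  apply (continuous_ext (fun z : space_time n => minus (g1 (fst z)) (mult (g2 (fst z)) (rho (snd z) * / lam)))).
  { intro z. unfold uf. rewrite vF_eq. unfold g1, g2, minus, plus, opp, mult; simpl. unfold Rdiv. ring. }
  exact (continuous_minus _ _ (t, eta) C1 (continuous_mult (fun z : space_time n => g2 (fst z)) (fun z : space_time n => rho (snd z) * / lam) (t, eta) C2' C3)).
Qed.

Lemma cont_pair n (t : R) (eta : Hpt n) : continuous (fun e : Hpt n => ((t, e) : space_time n)) eta.
Proof.
  apply (proj2 (filterlim_locally (F := locally eta) (fun e : Hpt n => ((t, e) : space_time n)) (t, eta))).
  intro eps. exists eps. intros y Hy. split. apply ball_center. exact Hy.
Qed.


Lemma touch n (q p : R) (u0 : Hpt n -> R) (u : R -> Hpt n -> R) T th0 kp lam eps ts es :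
  (1 <= n)%nat -> 1 <= q -> q + 1 < p ->
  classical_solution n q p T u0 u ->
  0 < ts < T -> 0 < th0 - kp * ts ->
  kp = eps * (p - 1) -> 0 < eps -> 0 < lam -> 12 * INR n = eps * lam ->
  lam <= Rpower (aF th0 kp (- / (p - 1)) ts) (p - q - 1) ->
  (forall s, 0 < s <= 1 -> 0 < Rpower s p + eps * (p - q - 1) * (1 - s) - 2 * eps * s) ->
  (forall t, 0 <= t < ts -> forall eta, vF th0 kp (- / (p - 1)) (p - q) lam t eta < u t eta) ->
  (forall eta, vF th0 kp (- / (p - 1)) (p - q) lam ts eta <= u ts eta) ->
  vF th0 kp (- / (p - 1)) (p - q) lam ts es = u ts es ->
  0 < u ts es -> False.
Proof.
  intros Hn Hq Hpq Hsol Hts Hth Hkp Heps Hlam H12 HlamA Hfin Hbefore Hall Heq Hupos.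
  destruct Hsol as [_ [Hreg [Heqn _]]].
  assert (Hp1 : 0 < p - 1) by lra.
  set (e1 := - / (p - 1)) in *.
  set (v := vF th0 kp e1 (p - q) lam) in *.
  set (th := th0 - kp * ts) in *.
  set (A := aF th0 kp e1 ts) in *.
  assert (HA : 0 < A) by apply Rpower_gt0.
  assert (HC2 : C2 (u ts)).
  { intros c eta. destruct (Hreg ts eta Hts) as [_ [_ Hc]]. destruct (Hc c) as [Hpd [Hcont Hc']].
    split; [exact Hpd|]. split.
    - exact (continuous_comp _ (fun z : space_time n => pd c (u (fst z)) (snd z)) eta (cont_pair n ts eta) Hcont).
    - intros c'. destruct (Hc' c') as [H1 H2]. split; [exact H1|].
      exact (continuous_comp _ (fun z : space_time n => pd c' (pd c (u (fst z))) (snd z)) eta (cont_pair n ts eta) H2). }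
  destruct (Hreg ts es Hts) as [Hex _].
  set (ut := Derive (fun s => u s es) ts).
  assert (Hut : is_derive (fun s => u s es) ts ut) by (apply Derive_correct; exact Hex).
  set (vt := e1 * Rpower th (e1 - 1) * (- kp) - (e1 * (p - q)) * Rpower th (e1 * (p - q) - 1) * (- kp) * rho es / lam).
  assert (Hvt : is_derive (fun s => v s es) ts vt) by (apply vF_derive; exact Hth).
  assert (Htime : ut - vt <= 0).
  { apply (deriv_left_nonpos (fun s => u s es - v s es) ts (ut - vt) ts).
    - apply (is_derive_minus (fun s => u s es) (fun s => v s es)); auto.
    - rewrite Heq. ring.
    - lra.
    - intros t Ht. specialize (Hbefore t ltac:(lra) es). lra. }
  specialize (Heqn ts es Hts). fold ut in Heqn.
  set (Bq := Rpower A (p - q) / lam).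
  assert (Hv : forall eta, v ts eta = A - Bq * rho eta).
  { intro eta. unfold v, vF, Bq. fold A. unfold Rdiv. ring. }
  assert (Hlap : - Bq * (4 * INR n + 8 * Zs es) <= DeltaH (u ts) es).
  { apply (laplace_bound n (u ts) es A Bq HC2).
    - intro eta. rewrite <- Hv. apply Hall.
    - rewrite <- Hv. exact Heq. }
  set (dl := p - q - 1) in *.
  set (rh := rho es). set (Z := Zs es). set (U := u ts es) in *.
  assert (Hrh : 0 <= rh) by apply rho_nonneg.
  assert (HZ : Z <= rh) by apply rho_Zs.
  assert (HZ0 : 0 <= Z) by apply Zs_nonneg.
  assert (HApq : Rpower A (p - q) = A * Rpower A dl).
  { replace (p - q) with (1 + dl) by (unfold dl; ring). rewrite Rpower_plus, Rpower_1; auto. }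
  assert (HAdl : 0 < Rpower A dl) by apply Rpower_gt0.
  set (s := 1 - Rpower A dl * rh / lam).
  assert (HU : U = A * s).
  { rewrite <- Heq. fold (v ts es). rewrite Hv. unfold Bq, s. rewrite HApq. unfold rh. field. lra. }
  assert (Hs0 : 0 < s).
  { apply Rmult_lt_reg_l with A; auto. rewrite Rmult_0_r, <- HU. exact Hupos. }
  assert (Hs1 : s <= 1).
  { unfold s. assert (0 <= Rpower A dl * rh / lam).
    { unfold Rdiv. apply Rmult_le_pos. apply Rmult_le_pos; lra. apply Rlt_le, Rinv_0_lt_compat; lra. }
    lra. }
  assert (Hrs : Rpower A dl * rh = lam * (1 - s)) by (unfold s; field; lra).
  assert (Hrh1 : rh <= 1).
  { assert (rh * lam <= rh * Rpower A dl) by (apply Rmult_le_compat_l; auto).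
    assert (rh * lam <= lam) by nra. nra. }
  assert (Hn1 : 1 <= INR n) by (apply (le_INR 1 n) in Hn; simpl in Hn; exact Hn).
  assert (Hth' : th = Rpower A (- (p - 1))).
  { unfold A, aF. fold th. rewrite Rpower_mult. replace (e1 * - (p - 1)) with 1 by (unfold e1; field; lra).
    rewrite Rpower_1; auto. }
  assert (HE1 : Rpower th (e1 - 1) = Rpower A p).
  { rewrite Hth', Rpower_mult. f_equal. unfold e1. field. lra. }
  assert (HE2 : Rpower th (e1 * (p - q) - 1) = Rpower A p * Rpower A dl).
  { rewrite Hth', Rpower_mult, <- Rpower_plus. f_equal. unfold e1, dl. field. lra. }
  assert (Hek : e1 * (- kp) = eps) by (rewrite Hkp; unfold e1; field; lra).
  set (Ap := Rpower A p).
  assert (HAp : 0 < Ap) by apply Rpower_gt0.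
  assert (Hvt' : vt = Ap * eps * (1 - (p - q) * (1 - s))).
  { unfold vt. rewrite HE1, HE2. fold Ap.
    replace (e1 * Ap * - kp) with (Ap * (e1 * - kp)) by ring. rewrite Hek.
    replace (e1 * (p - q) * (Ap * Rpower A dl) * - kp * rho es / lam)
      with ((e1 * - kp) * (p - q) * Ap * (Rpower A dl * rh) / lam) by (unfold rh, Rdiv; ring).
    rewrite Hek, Hrs. field. lra. }
  assert (HUq : Rpower U q = Rpower A q * Rpower s q) by (rewrite HU; symmetry; apply Rpower_mult_distr; auto).
  assert (HUp : Rpower U p = Ap * Rpower s p) by (rewrite HU; symmetry; apply Rpower_mult_distr; auto).
  assert (HAqB : Rpower A q * Bq = Ap / lam).
  { unfold Bq, Ap. replace p with (q + (p - q)) at 2 by ring. rewrite Rpower_plus. unfold Rdiv. ring. }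
  set (X := Rpower s q). set (Y := Rpower s p).
  assert (HX : 0 < X) by apply Rpower_gt0.
  assert (HXs : X <= s) by (apply Rpower_le_self; auto).
  assert (HAq : 0 < Rpower A q) by apply Rpower_gt0.
  set (W := 4 * INR n + 8 * Z).
  assert (HW : W <= eps * lam) by (unfold W; rewrite <- H12; lra).
  assert (HW0 : 0 <= W) by (unfold W; lra).
  assert (Hut_lb : Rpower A q * X * (- Bq * W) + Ap * Y <= ut).
  { rewrite Heqn, HUq, HUp. fold X Y. apply Rplus_le_compat_r. apply Rmult_le_compat_l.
    apply Rlt_le, Rmult_lt_0_compat; auto. exact Hlap. }
  assert (Hfirst : Rpower A q * X * (- Bq * W) = - (Ap / lam) * X * W).
  { rewrite <- HAqB. ring. }
  assert (Hsecond : (Ap / lam) * X * W <= Ap * eps * s).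
  { apply Rle_trans with ((Ap / lam) * X * (eps * lam)).
    - apply Rmult_le_compat_l; auto. apply Rmult_le_pos; [apply Rlt_le, Rdiv_lt_0_compat|]; lra.
    - replace (Ap / lam * X * (eps * lam)) with (Ap * eps * X) by (field; lra).
      apply Rmult_le_compat_l; auto. apply Rlt_le, Rmult_lt_0_compat; auto. }
  assert (Hcomb : Ap * (Y + eps * dl * (1 - s) - 2 * eps * s) <= 0).
  { replace (Ap * (Y + eps * dl * (1 - s) - 2 * eps * s))
      with ((Ap * Y - Ap * eps * s) - Ap * eps * (1 - (p - q) * (1 - s))) by (unfold dl; ring).
    rewrite <- Hvt'. lra. }
  specialize (Hfin s (conj Hs0 Hs1)). fold Y in Hfin.
  assert (0 < Ap * (Y + eps * dl * (1 - s) - 2 * eps * s)) by (apply Rmult_lt_0_compat; auto).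
  lra.
Qed.


Definition O0 (n : nat) : Hpt n := ((fun _ => 0, fun _ => 0), 0).

Lemma rho_O0 n : rho (O0 n) = 0.
Proof.
  unfold rho, Zs. replace (fun k : idx n => hx (O0 n) k ^ 2 + hy (O0 n) k ^ 2) with (fun _ : idx n => 0).
  - rewrite sum_idx_const. unfold htau, O0; simpl. ring.
  - apply functional_extensionality. intro k. unfold hx, hy, O0; simpl. ring.
Qed.

Theorem mainTheorem10 :
  forall (n : nat) (q p : R),
    (1 <= n)%nat -> 1 <= q -> 1 < p -> q + 1 < p ->
    forall w : Hpt n -> R,
      continuous_bounded w -> (forall eta, 0 < w eta) ->
      exists A : R, 0 < A /\
        ~ (exists u : R -> Hpt n -> R,
             global_classical_solution n q p (fun eta => A * w eta) u /\
             positive_solution u).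
Proof.
  intros n q p Hn Hq Hp Hpq w [Hwc _] Hwpos.
  assert (Hn1 : 1 <= INR n) by (apply (le_INR 1 n) in Hn; simpl in Hn; exact Hn).
  set (dl := p - q - 1).
  assert (Hdl : 0 < dl) by (unfold dl; lra).
  set (s0 := dl / (2 * (dl + 2))).
  assert (Hs0 : 0 < s0) by (unfold s0; apply Rdiv_lt_0_compat; lra).
  set (eps := Rpower s0 p / 4).
  assert (Heps : 0 < eps) by (unfold eps; pose proof (Rpower_gt0 s0 p); lra).
  set (lam := 12 * INR n / eps).
  assert (Hlam : 0 < lam) by (unfold lam; apply Rdiv_lt_0_compat; lra).
  assert (H12 : 12 * INR n = eps * lam) by (unfold lam; field; lra).
  set (a0 := Rpower lam (1 / dl) + 1).
  assert (Ha0 : 1 < a0) by (unfold a0; pose proof (Rpower_gt0 lam (1 / dl)); lra).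
  assert (Hlama0 : lam <= Rpower a0 dl).
  { apply Rle_trans with (Rpower (Rpower lam (1 / dl)) dl).
    - rewrite Rpower_mult. replace (1 / dl * dl) with 1 by (field; lra). rewrite Rpower_1; lra.
    - apply Rle_Rpower_l. lra. split. apply Rpower_gt0. unfold a0; lra. }
  set (kp := eps * (p - 1)).
  assert (Hkp : 0 < kp) by (unfold kp; apply Rmult_lt_0_compat; lra).
  set (e1 := - / (p - 1)).
  assert (He1 : e1 <= 0) by (unfold e1; assert (0 < / (p - 1)) by (apply Rinv_0_lt_compat; lra); lra).
  set (th0 := Rpower a0 (- (p - 1))).
  assert (Hth0 : 0 < th0) by apply Rpower_gt0.
  set (Ts := th0 / kp).
  assert (HTs : 0 < Ts) by (unfold Ts; apply Rdiv_lt_0_compat; lra).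
  assert (HkTs : kp * Ts = th0) by (unfold Ts; field; lra).
  destruct (w_lower n w Hwc Hwpos) as [m [Hm Hmw]].
  set (A0 := 2 * a0 / m).
  exists A0. split. { unfold A0. apply Rdiv_lt_0_compat; lra. }
  intros [u [Hglob Hpos]].
  set (T := Ts + 1).
  pose proof (Hglob T ltac:(unfold T; lra)) as Hsol.
  pose proof Hsol as [Hucont [_ [_ Hinit]]].
  set (v := @vF n th0 kp e1 (p - q) lam).
  set (a := aF th0 kp e1).
  assert (F1 : forall t, t < Ts -> 0 < th0 - kp * t).
  { intros t Ht. assert (kp * t < kp * Ts) by (apply Rmult_lt_compat_l; lra). lra. }
  assert (Ha0e : Rpower th0 e1 = a0).
  { unfold th0. rewrite Rpower_mult. replace (- (p - 1) * e1) with 1 by (unfold e1; field; lra).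
    apply Rpower_1. lra. }
  assert (F2 : forall t, 0 <= t < Ts -> a0 <= a t).
  { intros t Ht. rewrite <- Ha0e. unfold a, aF. apply Rpower_le_neg; auto.
    split. apply F1; lra. assert (0 <= kp * t) by (apply Rmult_le_pos; lra). lra. }
  assert (F4 : forall t, 0 <= t < Ts -> lam <= Rpower (a t) dl).
  { intros t Ht. apply Rle_trans with (Rpower a0 dl); auto. apply Rle_Rpower_l. lra.
    split. lra. apply F2; auto. }
  assert (Hvdef : forall t eta, v t eta = a t - a t * Rpower (a t) dl * rho eta / lam).
  { intros t eta. unfold v, vF. fold (a t).
    replace (p - q) with (1 + dl) by (unfold dl; ring). rewrite Rpower_plus, Rpower_1. reflexivity.
    apply Rpower_gt0. }
  assert (Hbound : forall t eta, 0 <= t < Ts -> 0 < v t eta -> rho eta <= 1).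
  { intros t eta Ht Hv. rewrite Hvdef in Hv.
    assert (Hat : 0 < a t) by apply Rpower_gt0.
    assert (HAd : lam <= Rpower (a t) dl) by auto.
    pose proof (rho_nonneg n eta).
    assert (Rpower (a t) dl * rho eta < lam).
    { assert (a t * (Rpower (a t) dl * rho eta / lam) < a t * 1).
      { replace (a t * (Rpower (a t) dl * rho eta / lam)) with (a t * Rpower (a t) dl * rho eta / lam)
          by (unfold Rdiv; ring). lra. }
      apply Rmult_lt_reg_l in H0; auto.
      apply Rmult_lt_reg_r with (/ lam). apply Rinv_0_lt_compat; lra.
      replace (lam * / lam) with 1 by (field; lra). exact H0. }
    assert (rho eta * lam <= rho eta * Rpower (a t) dl) by (apply Rmult_le_compat_l; auto).
    nra. }
  assert (Hv0 : forall eta, v 0 eta < u 0 eta).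
  { intro eta. rewrite Hinit.
    assert (Ha00 : a 0 = a0) by (unfold a, aF; rewrite Rmult_0_r, Rminus_0_r; exact Ha0e).
    assert (Hle : v 0 eta <= a0).
    { rewrite Hvdef, Ha00. pose proof (rho_nonneg n eta). pose proof (Rpower_gt0 a0 dl).
      assert (0 <= a0 * Rpower a0 dl * rho eta / lam).
      { unfold Rdiv. apply Rmult_le_pos. apply Rmult_le_pos. apply Rmult_le_pos; lra. lra.
        apply Rlt_le, Rinv_0_lt_compat; lra. }
      lra. }
    destruct (Rle_or_lt (v 0 eta) 0) as [Hn0|Hp0].
    - specialize (Hpos 0 eta (Rle_refl 0)). rewrite Hinit in Hpos. lra.
    - assert (Hr : rho eta <= 1) by (apply (Hbound 0); auto; lra).
      specialize (Hmw eta Hr).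
      assert (A0 * w eta >= 2 * a0).
      { assert (EA : A0 * m = 2 * a0) by (unfold A0; field; lra). rewrite <- EA. apply Rle_ge.
        apply Rmult_le_compat_l; auto. unfold A0. apply Rlt_le, Rdiv_lt_0_compat; lra. }
      lra. }
  assert (Hcomp : forall t1, 0 <= t1 < Ts -> forall t eta, 0 <= t <= t1 -> v t eta < u t eta).
  { intros t1 Ht1.
    apply (comparison n u v T t1 1).
    - unfold T; lra.
    - intros t eta Ht. apply Hucont. exact Ht.
    - intros t eta Ht. apply vF_cont. apply F1. lra.
    - intros t eta Ht. apply Hbound. lra.
    - intros t eta Ht. apply Hpos. lra.
    - exact Hv0.
    - intros ts es Hts Hbefore Hall Heq.
      apply (touch n q p _ u T th0 kp lam eps ts es Hn Hq Hpq Hsol).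
      + unfold T; lra.
      + apply F1; lra.
      + reflexivity.
      + exact Heps.
      + exact Hlam.
      + exact H12.
      + apply F4. lra.
      + intros s Hs. pose proof (final_ineq p dl s Hp Hdl Hs) as Hf. cbv zeta in Hf. exact Hf.
      + exact Hbefore.
      + exact Hall.
      + exact Heq.
      + apply Hpos. lra. }
  set (O := O0 n).
  destruct (proj1 (filterlim_locally (F := within (fun z : space_time n => 0 <= fst z <= T) (locally (Ts, O))) (FF := within_filter _ _ _ (@filter_filter _ _ (locally_filter _))) (uf u) (u Ts O))
              (Hucont Ts O ltac:(unfold T; lra)) (mkposreal 1 Rlt_0_1)) as [d Hd].
  set (M := u Ts O + 1).
  assert (HM : 0 < M) by (unfold M; pose proof (Hpos Ts O ltac:(lra)); lra).
  set (mu := Rmin (d / 2) (Rmin (Ts / 2) (Rpower M (- (p - 1)) / kp))).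
  assert (Hd0 : 0 < d) by apply cond_pos.
  assert (Hmu0 : 0 < mu).
  { unfold mu. apply Rmin_pos. lra. apply Rmin_pos. lra. apply Rdiv_lt_0_compat. apply Rpower_gt0. lra. }
  assert (Hmu1 : mu <= d / 2) by apply Rmin_l.
  assert (Hmu2 : mu <= Ts / 2) by (eapply Rle_trans; [apply Rmin_r| apply Rmin_l]).
  assert (Hmu3 : mu <= Rpower M (- (p - 1)) / kp) by (eapply Rle_trans; [apply Rmin_r| apply Rmin_r]).
  set (t := Ts - mu).
  assert (Hvt : v t O < u t O) by (apply (Hcomp t); unfold t; lra).
  assert (HvtO : v t O = a t).
  { rewrite Hvdef. unfold O. rewrite rho_O0. unfold Rdiv. ring. }
  assert (Hat : M <= a t).
  { unfold a, aF. replace (th0 - kp * t) with (kp * mu) by (unfold t; rewrite <- HkTs; ring).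
    apply Rle_trans with (Rpower (Rpower M (- (p - 1))) e1).
    - rewrite Rpower_mult. replace (- (p - 1) * e1) with 1 by (unfold e1; field; lra).
      rewrite Rpower_1; lra.
    - apply Rpower_le_neg; auto. split. apply Rmult_lt_0_compat; lra.
      replace (Rpower M (- (p - 1))) with (kp * (Rpower M (- (p - 1)) / kp)) by (field; lra).
      apply Rmult_le_compat_l; lra. }
  assert (Hball : ball (Ts, O) d (t, O)).
  { split. apply ball_R. simpl. unfold t. rewrite Rabs_left; lra. apply ball_center. }
  specialize (Hd _ Hball ltac:(simpl; unfold t, T; lra)).
  apply ball_R in Hd. unfold uf in Hd. simpl in Hd. apply Rabs_def2 in Hd.
  unfold minus, plus, opp in Hd; simpl in Hd. unfold M in Hat. lra.
Qed.
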